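(* Let $S\subset\{2,\dots,p\}$ with cardinality ${\rm s}$ and let $\gamma^\sharp\in\mathbb{R}^{p-1}$ have $\gamma^\sharp_j=0$ for all $j\notin S$. Let $\lambda^\sharp>0$ satisfy $\|\Sigma_{-1,-1}(\gamma^\sharp-\gamma^0)\|_\infty\le\lambda^\sharp$. If $\lambda^\sharp\sqrt{\rm s}\to0$, then also $\lambda^\sharp\|\gamma^\sharp\|_1\to0$, so that $(\gamma^\sharp,\lambda^\sharp)$ is an eligible pair. Moreover, $$1/\Theta^\sharp_{1,1}=\mathbb{E}(\mathbf{x}_1-\mathbf{x}_S\gamma^S_S)^2+o(1),\qquad\text{where }\gamma^S_S=\Sigma_{S,S}^{-1}\mathbb{E}\mathbf{x}_S^T\mathbf{x}_1 .$$
   Context: Asymptotic framework: all quantities may depend on $n$; limits as $n\to\infty$. $\mathbf{x}=(\mathbf{x}_1,\dots,\mathbf{x}_p)$ is a zero-mean Gaussian row vector with covariance $\Sigma$ nonsingular, all diagonal entries $1$, smallest eigenvalue $\Lambda_{\min}^2$ with $1/\Lambda_{\min}^2=\mathcal{O}(1)$. $\mathbf{x}_{-1}=(\mathbf{x}_2,\dots,\mathbf{x}_p)$, $\Sigma_{-1,-1}=\mathbb{E}\mathbf{x}_{-1}^T\mathbf{x}_{-1}$, $\gamma^0:=\Sigma_{-1,-1}^{-1}\mathbb{E}\mathbf{x}_{-1}^T\mathbf{x}_1$ (entries indexed by $\{2,\dots,p\}$). $\mathbf{x}_S=\{\mathbf{x}_j\}_{j\in S}$, $\Sigma_{S,S}=\mathbb{E}\mathbf{x}_S^T\mathbf{x}_S$.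 A pair $(\gamma,\lambda)$ is eligible if $\|\Sigma_{-1,-1}(\gamma-\gamma^0)\|_\infty\le\lambda$ and $\lambda\|\gamma\|_1\to0$. $\Theta^\sharp_{1,1}:=1/(1-\gamma^{0T}\Sigma_{-1,-1}\gamma^\sharp)$. *)

(* Defs.v *)
From HB Require Import structures.
From mathcomp Require Import all_boot all_order all_algebra.
From mathcomp Require Import classical_sets reals topology normedtype sequences.
Set Implicit Arguments. Unset Strict Implicit. Unset Printing Implicit Defensive.
Import Order.TTheory GRing.Theory Num.Theory numFieldNormedType.Exports.
Local Open Scope classical_set_scope.
Local Open Scope ring_scope.

(* Conventions: p = q.+1 ; coordinate x_1 is index ord0 of 'I_q.+1 and
   coordinate x_{i+2} (i : 'I_q) is index lift ord0 i. Vectors in R^{p-1}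
   are column vectors 'cV_q indexed by {2,..,p} via i |-> lift ord0 i.
   Sig is the covariance matrix E x^T x of the Gaussian row vector x. *)

Section Defs.
Variables (R : realType) (q : nat).

Definition Sig_m1m1 (Sig : 'M[R]_q.+1) : 'M[R]_q :=
  \matrix_(i, j) Sig (lift ord0 i) (lift ord0 j).

Definition Sig_m1_1 (Sig : 'M[R]_q.+1) : 'cV[R]_q :=
  \col_i Sig (lift ord0 i) ord0.

Definition gamma0 (Sig : 'M[R]_q.+1) : 'cV[R]_q :=
  invmx (Sig_m1m1 Sig) *m Sig_m1_1 Sig.

Definition l1norm (v : 'cV[R]_q) : R := \sum_i `|v i 0|.

Definition supnorm_le (Sig : 'M[R]_q.+1) (g : 'cV[R]_q) (lam : R) : Prop :=
  forall i, `|(Sig_m1m1 Sig *m (g - gamma0 Sig)) i 0| <= lam.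

Definition Theta11 (Sig : 'M[R]_q.+1) (g : 'cV[R]_q) : R :=
  (1 - ((gamma0 Sig)^T *m Sig_m1m1 Sig *m g) 0 0)^-1.

Definition Sig_SS (Sig : 'M[R]_q.+1) (S : {set 'I_q}) : 'M[R]_#|S| :=
  \matrix_(i, j) Sig_m1m1 Sig (@enum_val _ (mem S) i) (@enum_val _ (mem S) j).

Definition Sig_S1 (Sig : 'M[R]_q.+1) (S : {set 'I_q}) : 'cV[R]_#|S| :=
  \col_i Sig_m1_1 Sig (@enum_val _ (mem S) i) 0.

Definition gammaSS (Sig : 'M[R]_q.+1) (S : {set 'I_q}) : 'cV[R]_#|S| :=
  invmx (Sig_SS Sig S) *m Sig_S1 Sig S.

(* coefficient vector c in R^p with x c = x_1 - x_S g *)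
Definition resid_coef (S : {set 'I_q}) (g : 'cV[R]_#|S|) : 'cV[R]_q.+1 :=
  \col_a (if a == ord0 then 1
          else - \sum_(k : 'I_#|S|)
                   (if a == lift ord0 (@enum_val _ (mem S) k) then g k 0 else 0)).

(* E (x c)^2 = c^T (E x^T x) c = c^T Sig c *)
Definition second_moment (Sig : 'M[R]_q.+1) (c : 'cV[R]_q.+1) : R :=
  (c^T *m Sig *m c) 0 0.

Definition msq_resid (Sig : 'M[R]_q.+1) (S : {set 'I_q}) (g : 'cV[R]_#|S|) : R :=
  second_moment Sig (resid_coef g).

Definition std_cov (Sig : 'M[R]_q.+1) : Prop :=
  [/\ Sig^T = Sig,
      (forall c : 'cV[R]_q.+1, 0 <= (c^T *m Sig *m c) 0 0),
      Sig \in unitmx &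
      (forall a, Sig a a = 1)].

End Defs.

Definition eligible (R : realType) (q : nat -> nat) (Sig : forall n, 'M[R]_((q n).+1))
  (g : forall n, 'cV[R]_(q n)) (lam : nat -> R) : Prop :=
  (forall n, supnorm_le (Sig n) (g n) (lam n)) /\
  (fun n => lam n * l1norm (g n)) @ \oo --> (0 : R).

(* Main.v *)
Require Import Defs.
From HB Require Import structures.
From mathcomp Require Import all_boot all_order all_algebra.
From mathcomp Require Import classical_sets reals topology normedtype sequences.
From mathcomp Require Import complex spectral sesquilinear.
From mathcomp Require Import ring lra.
Import Order.TTheory GRing.Theory Num.Theory numFieldNormedType.Exports.
Local Open Scope classical_set_scope.
Local Open Scope ring_scope.

Section Ray.
Local Open Scope sesquilinear_scope.
Lemma diag_quad (C : numClosedFieldType) m (D : 'rV[C]_m) (w : 'rV[C]_m) c :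
  (forall i, c <= D 0 i) -> c * (w *m w^t*) 0 0 <= (w *m diag_mx D *m w^t*) 0 0.
Proof.
move=> HD; rewrite !mxE mulr_sumr; apply: ler_sum => i _.
rewrite mul_mx_diag !mxE mulrA -(mulrC (D 0 i)) -!mulrA.
by apply: ler_wpM2r => //; apply: mul_conjC_ge0.
Qed.

Variable R : realType.
Local Notation C := (R[i]).
Local Notation f := (real_complex R).

Lemma rayleigh m (M : 'M[R]_m) c : M^T = M ->
  (forall a, eigenvalue M a -> c <= a) ->
  forall v : 'rV[R]_m, c * (v *m v^T) 0 0 <= (v *m M *m v^T) 0 0.
Proof.
move=> Msym Heig v.
pose MC := map_mx f M.
have MCh : MC \is hermsymmx.
  apply: realsym_hermsym.
    apply/is_hermitianmxP. rewrite expr0 scale1r /MC. apply/matrixP => i j; rewrite !mxE /=.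
    by rewrite -[in LHS]Msym mxE.
  rewrite /MC; apply/mxOverP => i j; rewrite mxE; apply/complex_realP; by exists (M i j).
have /orthomx_spectralP HP := hermitian_normalmx MCh.
set P := spectralmx MC in HP; set D := spectral_diag MC in HP.
have Pu : P \is unitarymx := spectral_unitarymx MC.
have Punit : P \in unitmx := spectral_unit MC.
have Dreal := hermitian_spectral_diag_real MCh.
have HD : forall i, f c <= D 0 i.
  move=> i.
  have Dr : D 0 i \is Num.real by move/mxOverP: Dreal; apply.
  have := RRe_real Dr. move=> E. rewrite -E lecR; apply: Heig.
  have := eigenvalue_map (real_complex R) M (complex.Re (D 0 i)). move=> <-.
  apply/eigenvalueP.
  exists (row i P).
    transitivity (D 0 i *: row i P); last by congr (_ *: _); symmetry; exact: E.
    change (row i P *m MC = D 0 i *: row i P).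
    rewrite -row_mul {1}HP !mulmxA mulmxV // mul1mx mul_diag_mx; apply/rowP => j.
    by rewrite !mxE.
  apply/eqP => Hr.
  have := congr1 (mulmx^~ (invmx P)) Hr.
  rewrite mul0mx -row_mul mulmxV // => /rowP /(_ i); rewrite !mxE eqxx /=.
  by move/eqP; rewrite oner_eq0.
set vC := map_mx f v.
have vCT : v^T ^ f = vC^t*.
  apply/matrixP => i j; rewrite !mxE /= conj_Creal //; apply/complex_realP; by eexists.
have E1 : f ((v *m M *m v^T) 0 0) = (vC *m MC *m vC^t*) 0 0.
  by rewrite -vCT -!map_mxM [RHS]mxE.
have E2 : f (c * (v *m v^T) 0 0) = f c * (vC *m vC^t*) 0 0.
  by rewrite -vCT -!map_mxM [in RHS]mxE rmorphM.
suff key : f c * (vC *m vC^t*) 0 0 <= (vC *m MC *m vC^t*) 0 0.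
  by move: key; rewrite -E1 -E2 lecR.
rewrite HP (invmx_unitary Pu) !mulmxA.
have -> : vC *m vC^t* = vC *m P^t* *m (vC *m P^t*)^t*.
  by rewrite trmx_mul map_mxM trmxCK mulmxA mulmxKtV.
have -> : vC *m P^t* *m diag_mx D *m P *m vC^t* = vC *m P^t* *m diag_mx D *m (vC *m P^t*)^t*.
  by rewrite trmx_mul map_mxM trmxCK mulmxA.
exact: diag_quad.
Qed.
End Ray.

Lemma cs_ord (R : realType) m (a : 'I_m -> R) :
  (\sum_k a k) ^+ 2 <= m%:R * \sum_k a k ^+ 2.
Proof.
rewrite expr2 mulr_suml.
under eq_bigr => i _ do rewrite mulr_sumr.
apply: (@le_trans _ _ (\sum_i \sum_j (a i ^+ 2 / 2 + a j ^+ 2 / 2))).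
  apply: ler_sum => i _; apply: ler_sum => j _.
  have := sqr_ge0 (a i - a j); nra.
under eq_bigr => i _ do rewrite big_split /= sumr_const card_ord.
rewrite big_split /= sumr_const card_ord sumrMnl.
rewrite -mulr_suml.
set T := \sum_k _.
rewrite -mulrnDl (_ : T / 2 + T / 2 = T) ?mulr_natl //; lra.
Qed.

Section Main.
Variables (R : realType) (q : nat) (Sig : 'M[R]_q.+1).
Hypothesis Hsym : Sig^T = Sig.
Hypothesis Hdiag : forall a, Sig a a = 1.

Definition A i j := Sig (lift ord0 i) (lift ord0 j).
Definition b i := Sig (lift ord0 i) ord0.
Definition dot (x y : 'I_q -> R) := \sum_i x i * y i.
Definition Av (x : 'I_q -> R) i := \sum_j A i j * x j.
Definition emb (al : R) (x : 'I_q -> R) : 'cV[R]_q.+1 :=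
  \col_a (if unlift ord0 a is Some i then x i else al).

Lemma SigC a a' : Sig a a' = Sig a' a.
Proof. by rewrite -[in LHS]Hsym mxE. Qed.

Lemma quad_sum m (M : 'M[R]_m) (w : 'cV[R]_m) :
  (w^T *m M *m w) 0 0 = \sum_a \sum_a' w a 0 * M a a' * w a' 0.
Proof.
rewrite exchange_big mxE; apply: eq_bigr => a' _; rewrite mxE mulr_suml.
by apply: eq_bigr => a _; rewrite mxE.
Qed.

Lemma emb0 al x : emb al x ord0 0 = al.
Proof. by rewrite mxE unlift_none. Qed.
Lemma embS al x i : emb al x (lift ord0 i) 0 = x i.
Proof. by rewrite mxE liftK. Qed.

Lemma quad_emb al x :
  ((emb al x)^T *m Sig *m emb al x) 0 0 = al ^+ 2 + 2 * al * dot b x + dot x (Av x).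
Proof.
rewrite quad_sum big_ord_recl big_ord_recl.
under [X in _ + X]eq_bigr => i _ do rewrite big_ord_recl.
rewrite !emb0 Hdiag mulr1.
under [X in _ + X + _ = _]eq_bigr => i _ do rewrite embS.
under [X in _ + _ + X = _]eq_bigr => i _ do rewrite embS.
under [X in _ + _ + X = _]eq_bigr => i _ do under eq_bigr => j _ do rewrite embS.
rewrite /dot /Av big_split /= mulr_sumr.
rewrite -!addrA; congr (_ + _).
rewrite addrA -big_split /=; congr (_ + _).
  apply: eq_bigr => i _; rewrite /b SigC; ring.
apply: eq_bigr => i _; rewrite mulr_sumr; apply: eq_bigr => j _; rewrite /A; ring.
Qed.

Lemma norm_emb al x : ((emb al x)^T *m emb al x) 0 0 = al ^+ 2 + dot x x.
Proof.
rewrite mxE big_ord_recl !mxE unlift_none; congr (_ + _).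
by apply: eq_bigr => i _; rewrite !mxE liftK.
Qed.

Lemma bilE (u v : 'cV[R]_q) :
  (u^T *m Sig_m1m1 Sig *m v) 0 0 = dot (fun i => u i 0) (Av (fun j => v j 0)).
Proof.
rewrite mxE /dot /Av.
under eq_bigr => j _ do rewrite mxE mulr_suml.
rewrite exchange_big; apply: eq_bigr => i _; rewrite mulr_sumr; apply: eq_bigr => j _.
by rewrite !mxE /A mulrA.
Qed.

Lemma AvE (v : 'cV[R]_q) i : (Sig_m1m1 Sig *m v) i 0 = Av (fun j => v j 0) i.
Proof. by rewrite mxE; apply: eq_bigr => j _; rewrite mxE. Qed.

Lemma AC i j : A i j = A j i.
Proof. by rewrite /A SigC. Qed.

Lemma dot_sym x y : dot x y = dot y x.
Proof. by apply: eq_bigr => i _; rewrite mulrC. Qed.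

Lemma bil_sym x y : dot x (Av y) = dot y (Av x).
Proof.
rewrite /dot /Av.
under eq_bigr => i _ do rewrite mulr_sumr.
under [RHS]eq_bigr => i _ do rewrite mulr_sumr.
rewrite exchange_big; apply: eq_bigr => i _; apply: eq_bigr => j _.
by rewrite AC; ring.
Qed.

Lemma Av_sub x y i : Av (fun j => x j - y j) i = Av x i - Av y i.
Proof. by rewrite /Av -sumrB; apply: eq_bigr => j _; rewrite mulrBr. Qed.

Lemma Av_opp x i : Av (fun j => - x j) i = - Av x i.
Proof. by rewrite /Av -sumrN; apply: eq_bigr => j _; rewrite mulrN. Qed.

Lemma dot_subl x y z : dot (fun i => x i - y i) z = dot x z - dot y z.
Proof. by rewrite /dot -sumrB; apply: eq_bigr => j _; rewrite mulrBl. Qed.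

Lemma dot_subr x y z : dot z (fun i => x i - y i) = dot z x - dot z y.
Proof. by rewrite /dot -sumrB; apply: eq_bigr => j _; rewrite mulrBr. Qed.

Lemma dot_oppl x z : dot (fun i => - x i) z = - dot x z.
Proof. by rewrite /dot -sumrN; apply: eq_bigr => j _; rewrite mulNr. Qed.

Lemma dot_oppr x z : dot z (fun i => - x i) = - dot z x.
Proof. by rewrite /dot -sumrN; apply: eq_bigr => j _; rewrite mulrN. Qed.

Lemma bil_expand x y :
  dot (fun i => x i - y i) (Av (fun i => x i - y i)) =
  dot x (Av x) - 2 * dot x (Av y) + dot y (Av y).
Proof.
have -> : Av (fun i => x i - y i) = fun i => Av x i - Av y i.
  by apply: boolp.funext => i; rewrite Av_sub.
rewrite dot_subl !dot_subr (bil_sym y x); ring.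
Qed.

Section Ext.
Variable S : {set 'I_q}.
Local Notation e := (@enum_val _ (mem S)).
Definition ext (v : 'I_#|S| -> R) (j : 'I_q) : R :=
  \sum_k (if j == e k then v k else 0).

Lemma dot_ext F v : dot F (ext v) = \sum_k F (e k) * v k.
Proof.
rewrite /dot /ext.
under eq_bigr => j _ do rewrite mulr_sumr.
rewrite exchange_big; apply: eq_bigr => k _.
rewrite (bigD1 (e k)) //= eqxx big1 ?addr0 // => j /negbTE ->.
by rewrite mulr0.
Qed.

Lemma ext_e v k : ext v (e k) = v k.
Proof.
rewrite /ext (bigD1 k) //= eqxx big1 ?addr0 // => k' nk.
by rewrite (inj_eq enum_val_inj) eq_sym (negbTE nk).
Qed.

Lemma ext_sub v w j : ext (fun k => v k - w k) j = ext v j - ext w j.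
Proof. by rewrite /ext -sumrB; apply: eq_bigr => k _; case: ifP; rewrite ?subr0. Qed.

Lemma supp_ext g : (forall j, j \notin S -> g j = 0) ->
  forall j, ext (fun k => g (e k)) j = g j.
Proof.
move=> Hg j; case: (boolP (j \in S)) => jS.
  by rewrite -{1}(enum_rankK_in jS jS) ext_e (enum_rankK_in jS jS).
rewrite Hg // /ext big1 // => k _; case: ifP => // /eqP jk.
by move: jS; rewrite jk enum_valP.
Qed.
End Ext.

Section Pos.
Hypothesis Hpsd : forall w : 'cV[R]_q.+1, 0 <= (w^T *m Sig *m w) 0 0.
Variable c : R.
Hypothesis Hc : 0 < c.
Hypothesis Hray : forall w : 'cV[R]_q.+1, c * (w^T *m w) 0 0 <= (w^T *m Sig *m w) 0 0.

Lemma psd_emb al x : 0 <= al ^+ 2 + 2 * al * dot b x + dot x (Av x).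
Proof. by rewrite -quad_emb. Qed.

Lemma ray_x x : c * dot x x <= dot x (Av x).
Proof.
have := Hray (emb 0 x); rewrite quad_emb norm_emb.
by rewrite expr2 !mul0r mulr0 !add0r mul0r add0r.
Qed.

Lemma dot_ge0 x : 0 <= dot x x.
Proof. by apply: sumr_ge0 => i _; rewrite -expr2 sqr_ge0. Qed.

Lemma pd_zero x : dot x (Av x) <= 0 -> forall i, x i = 0.
Proof.
move=> H i.
have H0 : dot x x = 0.
  apply/eqP; rewrite eq_le dot_ge0 andbT.
  have := le_trans (ray_x x) H.
  by rewrite pmulr_rle0.
have Hn : forall i, predT i -> 0 <= x i * x i by move=> i0 _; rewrite -expr2 sqr_ge0.
have := @psumr_eq0P _ _ _ _ Hn H0 i isT.
by move/eqP; rewrite mulf_eq0 orbb => /eqP.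
Qed.

Lemma A_unit : Sig_m1m1 Sig \in unitmx.
Proof.
rewrite unitmxE unitfE; apply/negP => /det0P [v vn0 vA].
have H : dot (fun i => v^T i 0) (Av (fun i => v^T i 0)) <= 0.
  by rewrite -bilE trmxK vA mul0mx mxE.
move/negP: vn0; apply; apply/eqP/rowP => i.
have := pd_zero _ H i; rewrite !mxE => ->; by [].
Qed.

Definition g0 := fun j => gamma0 Sig j 0.

Lemma g0E i : Av g0 i = b i.
Proof. by rewrite /g0 -AvE /gamma0 mulKVmx ?A_unit // mxE. Qed.

Lemma g0_le1 : dot g0 (Av g0) <= 1.
Proof.
have E : dot g0 (Av g0) = dot b g0.
  by rewrite dot_sym; apply: eq_bigr => i _; rewrite g0E.
have := psd_emb 1 (fun i => - g0 i).
rewrite dot_oppr.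
have -> : Av (fun i => - g0 i) = fun i => - Av g0 i.
  by apply: boolp.funext => i; rewrite Av_opp.
rewrite dot_oppl dot_oppr opprK E; lra.
Qed.

Section P1.
Variables (S : {set 'I_q}) (g : 'I_q -> R) (lam : R).
Hypothesis Hsupp : forall j, j \notin S -> g j = 0.
Hypothesis Hlam0 : 0 <= lam.
Hypothesis Hsup : forall i, `|Av g i - b i| <= lam.
Local Notation e := (@enum_val _ (mem S)).

Lemma l1_bound : (\sum_i `|g i|) ^+ 2 <= #|S|%:R * dot g g.
Proof.
have E1 : \sum_i `|g i| = \sum_(k < #|S|) `|g (e k)|.
  transitivity (\sum_(j in S) `|g j|); last exact: big_enum_val.
  rewrite (bigID (mem S)) /= [X in _ + X]big1 ?addr0 // => j jS.
  by rewrite Hsupp ?normr0.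
have E2 : dot g g = \sum_(k < #|S|) g (e k) ^+ 2.
  rewrite -{2}(boolp.funext (@supp_ext S g Hsupp)) dot_ext.
  by apply: eq_bigr => k _; rewrite expr2.
rewrite E1 E2; apply: le_trans (cs_ord _ _ _) _.
by under eq_bigr => k _ do rewrite real_normK ?num_real //.
Qed.

Lemma t_bound : dot g (Av g) <= 1 + 2 * lam * \sum_i `|g i|.
Proof.
set t := dot g (Av g); set l1 := \sum_i _.
have H1 : t <= dot g b + lam * l1.
  have -> : t = dot g b + dot g (fun i => Av g i - b i) by rewrite dot_subr addrC subrK.
  rewrite lerD2l; apply: le_trans (ler_norm _) _; rewrite /dot. apply: le_trans; first exact: ler_norm_sum.
  rewrite /l1 mulr_sumr; apply: ler_sum => i _.
  by rewrite normrM mulrC ler_wpM2r.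
have H2 : 2 * dot g b <= t + dot g0 (Av g0).
  have E : dot g b = dot g (Av g0) by apply: eq_bigr => i _; rewrite g0E.
  have := bil_expand g g0.
  have P : 0 <= dot (fun i => g i - g0 i) (Av (fun i => g i - g0 i)).
    apply: le_trans (ray_x _); apply: mulr_ge0; [exact: ltW | exact: dot_ge0].
  rewrite E /t; lra.
have := g0_le1; lra.
Qed.

Lemma part1_bound :
  (lam * \sum_i `|g i|) ^+ 2 <= 2 * (lam ^+ 2 * #|S|%:R / c) + 4 * (lam ^+ 2 * #|S|%:R / c) ^+ 2.
Proof.
set l1 := \sum_i _; set s := #|S|%:R; set k := lam ^+ 2 * s / c.
have l1ge0 : 0 <= l1 by apply: sumr_ge0 => i _.
have w0 : 0 <= lam * l1 by apply: mulr_ge0.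
have H1 := l1_bound; have H2 := t_bound; have H3 := ray_x g.
have s0 : 0 <= s by [].
have Hk : k * c = lam ^+ 2 * s by rewrite /k mulfVK // gt_eqF.
have L2 : 0 <= lam ^+ 2 by apply: sqr_ge0.
have X1 : c * (lam ^+ 2 * l1 ^+ 2) <= c * (lam ^+ 2 * (s * dot g g)).
  by apply: ler_wpM2l; [exact: ltW | apply: ler_wpM2l].

have X2 : lam ^+ 2 * (s * (c * dot g g)) <= lam ^+ 2 * (s * (1 + 2 * lam * l1)).
  apply: ler_wpM2l => //; apply: ler_wpM2l => //; exact: le_trans H3 H2.
have H4 : c * (lam * l1) ^+ 2 <= k * c * (1 + 2 * (lam * l1)).
  rewrite Hk exprMn; lra.
have H5 : (lam * l1) ^+ 2 <= k * (1 + 2 * (lam * l1)).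
  by rewrite -(ler_pM2l Hc) [c * (k * _)]mulrA [c * k]mulrC.
set w := lam * l1 in w0 H5 *.
have k0 : 0 <= k by rewrite /k; apply: divr_ge0; [exact: mulr_ge0 | exact: ltW].
nra.
Qed.
End P1.

Section P2.
Variables (S : {set 'I_q}) (gs : 'cV[R]_q) (lam : R).
Hypothesis Hsupp : forall j, j \notin S -> gs j 0 = 0.
Hypothesis Hlam0 : 0 <= lam.
Hypothesis Hsup : supnorm_le Sig gs lam.
Local Notation e := (@enum_val _ (mem S)).
Local Notation ext := (@ext S).
Let g := fun j => gs j 0.

Lemma Hsup_g i : `|Av g i - b i| <= lam.
Proof.
have := Hsup i; rewrite AvE.
have -> : (fun j => (gs - gamma0 Sig) j 0) = fun j => g j - g0 j.
  by apply: boolp.funext => j; rewrite [LHS]mxE [X in _ + X = _]mxE.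
have E : Av (fun j => g j - g0 j) i = Av g i - b i.
  by rewrite Av_sub g0E.
by rewrite E.
Qed.

Lemma SSE (v : 'cV[R]_#|S|) k :
  (Sig_SS Sig S *m v) k 0 = Av (ext (fun k => v k 0)) (e k).
Proof.
rewrite mxE /Av.
have -> : \sum_j A (e k) j * ext (fun k0 => v k0 0) j =
          dot (fun j => A (e k) j) (ext (fun k0 => v k0 0)) by [].
rewrite (dot_ext S); apply: eq_bigr => k' _; by rewrite !mxE.
Qed.

Lemma SS_unit : Sig_SS Sig S \in unitmx.
Proof.
rewrite unitmxE unitfE; apply/negP => /det0P [v vn0 vA].
set x := ext (fun k => v^T k 0).
have H : dot x (Av x) <= 0.
  rewrite dot_sym /x (dot_ext S).
  have SSsym : (Sig_SS Sig S)^T = Sig_SS Sig S.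
    by apply/matrixP => i j; rewrite !mxE /A SigC.
  have -> : \sum_k Av (ext (fun k0 => v^T k0 0)) (e k) * v^T k 0 = 0.
    apply: big1 => k _; rewrite -SSE -SSsym -trmx_mul vA !mxE; by rewrite mul0r.
  by [].
move/negP: vn0; apply; apply/eqP/rowP => k.
have := pd_zero _ H (e k); rewrite /x (ext_e S) !mxE => ->; by [].
Qed.

Let hS := fun k => gammaSS Sig S k 0.
Let r := \sum_k b (e k) * hS k.

Lemma AvhS k : Av (ext hS) (e k) = b (e k).
Proof. by rewrite -SSE /gammaSS mulKVmx ?SS_unit // !mxE. Qed.

Lemma msqE : msq_resid Sig (gammaSS Sig S) = 1 - r.
Proof.
rewrite /msq_resid /second_moment.
have -> : resid_coef (gammaSS Sig S) = emb 1 (fun j => - ext hS j).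
  apply/colP => a; rewrite !mxE; case: unliftP => [j ->|->].
    rewrite eq_sym (negbTE (neq_lift _ _)) /ext; congr (- _).
  by rewrite eqxx.
rewrite quad_emb dot_oppr.
have -> : Av (fun j => - ext hS j) = fun j => - Av (ext hS) j.
  by apply: boolp.funext => j; rewrite Av_opp.
rewrite dot_oppl dot_oppr opprK.
have E1 : dot b (ext hS) = r by rewrite (dot_ext S).
have E2 : dot (ext hS) (Av (ext hS)) = r.
  by rewrite dot_sym (dot_ext S); apply: eq_bigr => k _; rewrite AvhS.
rewrite E1 E2; ring.
Qed.

Lemma r_le1 : r <= 1.
Proof.
have := Hpsd (resid_coef (gammaSS Sig S)).
by move: msqE; rewrite /msq_resid /second_moment => ->; lra.
Qed.

Lemma hS_bound : c * \sum_k hS k ^+ 2 <= 1.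
Proof.
apply: le_trans r_le1.
have E2 : dot (ext hS) (Av (ext hS)) = r.
  by rewrite dot_sym (dot_ext S); apply: eq_bigr => k _; rewrite AvhS.
rewrite -E2; apply: le_trans (ray_x _).
rewrite (dot_ext S); apply: ler_wpM2l; first exact: ltW.
by rewrite le_eqVlt; apply/orP; left; apply/eqP; apply: eq_bigr => k _; rewrite (ext_e S) expr2.
Qed.

Lemma ThetaE : (Theta11 Sig gs)^-1 = 1 - dot g b.
Proof.
rewrite /Theta11 invrK bilE.
rewrite (bil_sym (fun i => gamma0 Sig i 0)).
by congr (1 - _); apply: eq_bigr => i _; rewrite g0E.
Qed.

Lemma DeltaE : (Theta11 Sig gs)^-1 - msq_resid Sig (gammaSS Sig S) =
  \sum_k hS k * (b (e k) - Av g (e k)).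
Proof.
rewrite ThetaE msqE.
set gS := fun k => g (e k).
have Eg : forall j, ext gS j = g j by exact: (@supp_ext S g Hsupp).
have E1 : dot g b = \sum_k b (e k) * gS k.
  rewrite dot_sym -{1}(boolp.funext Eg) (dot_ext S) //.
have E3 : r - dot g b = dot (Av (ext hS)) (ext (fun k => hS k - gS k)).
  rewrite (dot_ext S) E1 /r -sumrB; apply: eq_bigr => k _; rewrite AvhS; ring.
have -> : 1 - dot g b - (1 - r) = r - dot g b by ring.
have Hsub : ext (fun k => hS k - gS k) = fun j => ext hS j - ext gS j.
  by apply: boolp.funext => j; rewrite (ext_sub S).
rewrite E3 dot_sym bil_sym dot_sym (dot_ext S); apply: eq_bigr => k _.
rewrite Hsub Av_sub AvhS -(boolp.funext Eg); ring.
Qed.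

Lemma part2_bound : ((Theta11 Sig gs)^-1 - msq_resid Sig (gammaSS Sig S)) ^+ 2
   <= lam ^+ 2 * #|S|%:R / c.
Proof.
rewrite DeltaE.
set l1 := \sum_k `|hS k|.
have H1 : `|\sum_k hS k * (b (e k) - Av g (e k))| <= lam * l1.
  apply: le_trans; first exact: ler_norm_sum.
  rewrite /l1 mulr_sumr; apply: ler_sum => k _.
  rewrite normrM mulrC ler_wpM2r //.
  by rewrite distrC; exact: Hsup_g.
have l10 : 0 <= l1 by apply: sumr_ge0 => k _.
have H2 : l1 ^+ 2 <= #|S|%:R * \sum_k hS k ^+ 2.
  apply: le_trans (cs_ord _ _ _) _.
  by under eq_bigr => k _ do rewrite real_normK ?num_real //.
have H3 := hS_bound.
set D := \sum_k _ * _ in H1 *.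
set Q := \sum_k hS k ^+ 2 in H2 H3.
set s := #|S|%:R in H2 *.
have s0 : 0 <= s by [].
have HD : D ^+ 2 <= (lam * l1) ^+ 2.
  rewrite -real_normK ?num_real //; apply: lerXn2r; rewrite ?nnegrE //.
  exact: mulr_ge0.
apply: le_trans HD _.
rewrite exprMn ler_pdivlMr //.
have L2 : 0 <= lam ^+ 2 by apply: sqr_ge0.
have X1 : lam ^+ 2 * l1 ^+ 2 <= lam ^+ 2 * (s * Q) by apply: ler_wpM2l.
have X2 : lam ^+ 2 * (s * (c * Q)) <= lam ^+ 2 * (s * 1).
  by apply: ler_wpM2l => //; apply: ler_wpM2l.
have X3 : c * (lam ^+ 2 * l1 ^+ 2) <= c * (lam ^+ 2 * (s * Q)).
  by apply: ler_wpM2l => //; exact: ltW.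
lra.
Qed.
End P2.
End Pos.
End Main.

Lemma lim_sq (R : realType) (z u : nat -> R) (K : R) : 0 < K ->
  u @ \oo --> (0 : R) ->
  (\forall n \near \oo, z n ^+ 2 <= K * (u n ^+ 2 + u n ^+ 4)) ->
  z @ \oo --> (0 : R).
Proof.
move=> K0 /cvgr0Pnorm_lt Hu Hz; apply/cvgr0Pnorm_lt => e e0.
set d := Num.min 1 (e / (2 * K + 1)).
have K1 : 0 < 2 * K + 1 by lra.
have d0 : 0 < d by rewrite lt_min ltr01 divr_gt0.
move: (Hu d d0) Hz; apply: filterS2 => n Hun Hzn.
have d1 : d <= 1 by rewrite ge_min lexx.
have d2 : d * (2 * K + 1) <= e.
  by rewrite -ler_pdivlMr // ge_min lexx orbT.
set a := `|u n| in Hun.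
have a0 : 0 <= a by exact: normr_ge0.
have ua : u n ^+ 2 = a ^+ 2 by rewrite real_normK ?num_real.
have ua4 : u n ^+ 4 = a ^+ 2 * a ^+ 2 by rewrite -[4%N]/(2 * 2)%N exprM ua expr2.
have za : z n ^+ 2 = `|z n| ^+ 2 by rewrite real_normK ?num_real.
rewrite ua ua4 za in Hzn.
set y := `|z n| in Hzn *.
have y0 : 0 <= y by exact: normr_ge0.
have a1 : a < 1 by exact: lt_le_trans Hun d1.
have a2 : a * (2 * K + 1) < e.
  apply: lt_le_trans d2; rewrite ltr_pM2r //.
have a4 : a ^+ 2 * a ^+ 2 <= a ^+ 2 by rewrite ler_piMr ?sqr_ge0 // expr_le1 // ltW.
have h1 : y ^+ 2 <= 2 * K * a ^+ 2.
  have : K * (a ^+ 2 * a ^+ 2) <= K * a ^+ 2 by apply: ler_wpM2l => //; exact: ltW.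
  lra.
set x := a * (2 * K + 1) in a2.
have x0 : 0 <= x by apply: mulr_ge0 => //; exact: ltW.
have h2 : x ^+ 2 < e ^+ 2.
  rewrite -subr_gt0 subr_sqr; apply: mulr_gt0; lra.
have h3 : 2 * K * a ^+ 2 <= x ^+ 2.
  rewrite /x exprMn; have := sqr_ge0 a; have := sqr_ge0 K; nra.
have h4 : y ^+ 2 < e ^+ 2 by lra.
rewrite ltNge; apply/negP => ey.
have : e ^+ 2 <= y ^+ 2 by rewrite ler_pXn2r // ?nnegrE //; exact: ltW.
lra.
Qed.

Theorem lemma3p5 (R : realType) (q : nat -> nat)
  (Sig : forall n, 'M[R]_((q n).+1))
  (S : forall n, {set 'I_(q n)})
  (gs : forall n, 'cV[R]_(q n)) (lams : nat -> R) :
  (* standing assumptions on the covariance *)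
  (forall n, std_cov (Sig n)) ->
  (* 1 / Lambda_min^2 = O(1): eigenvalues eventually bounded below *)
  (exists2 c : R, 0 < c &
     \forall n \near \oo, forall a : R, eigenvalue (Sig n) a -> c <= a) ->
  (* gamma^sharp supported on S *)
  (forall n j, j \notin S n -> gs n j 0 = 0) ->
  (forall n, 0 < lams n) ->
  (forall n, supnorm_le (Sig n) (gs n) (lams n)) ->
  (fun n => lams n * Num.sqrt (#|S n|%:R)) @ \oo --> (0 : R) ->
  eligible Sig gs lams /\
  (fun n => (Theta11 (Sig n) (gs n))^-1 - msq_resid (Sig n) (gammaSS (Sig n) (S n)))
     @ \oo --> (0 : R).
Proof.
move=> Hcov [c c0 Hev] Hsupp Hlam Hsup Hu.
have Hray : \forall n \near \oo, forall w : 'cV[R]_(q n).+1,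
    c * (w^T *m w) 0 0 <= (w^T *m Sig n *m w) 0 0.
  apply: filterS Hev => n Hn w.
  have [Hs _ _ _] := Hcov n.
  by have := rayleigh _ _ _ _ Hs Hn w^T; rewrite trmxK.
set u := fun n => lams n * Num.sqrt #|S n|%:R.
have Hk : forall n, lams n ^+ 2 * #|S n|%:R / c = u n ^+ 2 / c.
  by move=> n; rewrite /u exprMn sqr_sqrtr ?ler0n.
set K := 2 / c + 4 / c ^+ 2.
have ic0 : 0 < c^-1 by rewrite invr_gt0.
have K0 : 0 < K by rewrite /K; apply: addr_gt0; apply: divr_gt0; rewrite ?exprn_gt0.
have KE : forall x : R, 2 * (x ^+ 2 / c) + 4 * (x ^+ 2 / c) ^+ 2 <= K * (x ^+ 2 + x ^+ 4).
  move=> x; rewrite /K -exprVn; set ic := c^-1.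
  have -> : x ^+ 4 = x ^+ 2 * x ^+ 2 by rewrite -exprD.
  have := sqr_ge0 x; set y := x ^+ 2 => y0.
  have h1 : 0 <= ic * (y * y) by apply: mulr_ge0 => //; [exact: ltW | exact: mulr_ge0].
  have h2 : 0 <= ic * ic * y by apply: mulr_ge0 => //; apply: mulr_ge0; exact: ltW.
  rewrite !expr2; nra.
split.
  split => //.
  apply: (@lim_sq _ _ _ _ K0 Hu); apply: filterS Hray => n Hn.
  have [Hs Hp _ Hd] := Hcov n.
  have := @part1_bound _ _ _ Hs Hd Hp c c0 Hn (S n) (fun j => gs n j 0) (lams n)
           (Hsupp n) (ltW (Hlam n)) (@Hsup_g _ _ _ Hs Hd c c0 Hn (gs n) (lams n) (Hsup n)).
  rewrite Hk => H; apply: le_trans H _; exact: KE.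
apply: (@lim_sq _ _ _ _ K0 Hu); apply: filterS Hray => n Hn.
have [Hs Hp _ Hd] := Hcov n.
have := @part2_bound _ _ _ Hs Hd Hp c c0 Hn (S n) (gs n) (lams n) (Hsupp n) (ltW (Hlam n)) (Hsup n).
rewrite Hk => H; apply: le_trans H _; apply: le_trans (KE _).
have := sqr_ge0 (u n ^+ 2 / c); have := sqr_ge0 (u n); have := ltW ic0.
set y := u n ^+ 2; nra.
Qed.
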